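(* Let $\gamma\in(1,2]$, $a>0$ and $u\in\mathbb R^3$, and let $$g(\lambda)=\lambda^3-\frac1{4\gamma}\big(4a^4+4a^2+\gamma(|u|^2+2)^2\big)\lambda^2+\frac{a^2}{4\gamma^2}\Big(4a^4-4a^2+\gamma\big[4(|u|^2+1)a^2+(|u|^2+2)^2\big]\Big)\lambda-\frac{a^6(\gamma-1)}{\gamma^3}.$$ Assume $g$ has three positive real roots $0<\lambda_1<\lambda_2<\lambda_3$. Then $$\lambda_1\ge\frac{a^2(\gamma-1)}{\gamma}\min\Big(\frac{a^2}{\gamma(|u|^2+2)^2},\ \frac1{4(a^2+1)},\ \frac1{4\gamma(|u|^2+1)}\Big).$$ *)

(* Defs.v *)
From mathcomp Require Import all_boot all_order all_algebra.
From mathcomp Require Import reals.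
Set Implicit Arguments. Unset Strict Implicit. Unset Printing Implicit Defensive.
Import Order.TTheory GRing.Theory Num.Theory.
Local Open Scope ring_scope.

Definition sqnorm3 {R : realType} (u : 'rV[R]_3) : R := \sum_(i < 3) u 0 i ^+ 2.

Definition gcubic {R : realType} (gam a : R) (u : 'rV[R]_3) (l : R) : R :=
  let s := sqnorm3 u in
  l ^+ 3
  - (4 * a ^+ 4 + 4 * a ^+ 2 + gam * (s + 2) ^+ 2) / (4 * gam) * l ^+ 2
  + a ^+ 2 / (4 * gam ^+ 2)
      * (4 * a ^+ 4 - 4 * a ^+ 2 + gam * (4 * (s + 1) * a ^+ 2 + (s + 2) ^+ 2)) * l
  - a ^+ 6 * (gam - 1) / gam ^+ 3.

(* Main.v *)
Require Import Defs.
From mathcomp Require Import all_boot all_order all_algebra.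
From mathcomp Require Import reals.
From mathcomp Require Import ring lra.
Import Order.TTheory GRing.Theory Num.Theory.
Local Open Scope ring_scope.

Lemma vieta (R : realFieldType) (B C D x y z : R) :
  x != y -> x != z -> y != z ->
  x^+3 - B * x^+2 + C * x - D = 0 ->
  y^+3 - B * y^+2 + C * y - D = 0 ->
  z^+3 - B * z^+2 + C * z - D = 0 ->
  [/\ B = x + y + z, C = x*y + x*z + y*z & D = x*y*z].
Proof.
move=> nxy nxz nyz hx hy hz.
have e1 : x^+2 + x*y + y^+2 - B*(x+y) + C = 0.
  have E : (x - y) * (x^+2 + x*y + y^+2 - B*(x+y) + C) =
     (x^+3 - B * x^+2 + C * x - D) - (y^+3 - B * y^+2 + C * y - D) by ring.
  move: E; rewrite hx hy subrr => /eqP.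
  by rewrite mulf_eq0 subr_eq0 (negbTE nxy) => /eqP.
have e2 : x^+2 + x*z + z^+2 - B*(x+z) + C = 0.
  have E : (x - z) * (x^+2 + x*z + z^+2 - B*(x+z) + C) =
     (x^+3 - B * x^+2 + C * x - D) - (z^+3 - B * z^+2 + C * z - D) by ring.
  move: E; rewrite hx hz subrr => /eqP.
  by rewrite mulf_eq0 subr_eq0 (negbTE nxz) => /eqP.
have eB : B = x + y + z.
  have E : (y - z) * (x + y + z - B) = 
    (x^+2 + x*y + y^+2 - B*(x+y) + C) - (x^+2 + x*z + z^+2 - B*(x+z) + C) by ring.
  move: E; rewrite e1 e2 subrr => /eqP.
  by rewrite mulf_eq0 subr_eq0 (negbTE nyz) /= subr_eq0 => /eqP <-.
have eC : C = x*y + x*z + y*z.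
  have E : C - (x*y + x*z + y*z) = x^+2 + x*y + y^+2 - B*(x+y) + C by rewrite eB; ring.
  by apply/eqP; rewrite -subr_eq0 E e1.
have E : D - x*y*z = - (x^+3 - B * x^+2 + C * x - D) by rewrite eB eC; ring.
by split=> //; apply/eqP; rewrite -subr_eq0 E hx oppr0.
Qed.

Lemma key (R : realFieldType) (g a s m : R) : 1 < g -> 0 < a -> 0 <= s -> 0 <= m ->
  m <= a ^+ 2 / (g * (s + 2) ^+ 2) -> m <= 1 / (4 * (a ^+ 2 + 1)) ->
  m <= 1 / (4 * g * (s + 1)) ->
  m * (4 * a ^+ 4 - 4 * a ^+ 2 + g * (4 * (s + 1) * a ^+ 2 + (s + 2) ^+ 2)) <= 4 * a^+2.
Proof.
move=> g1 a0 s0 m0 h1 h2 h3.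
have P1 : 0 < g * (s + 2) ^+ 2 by apply: mulr_gt0; [lra| apply: exprn_gt0; lra].
have P2 : 0 < 4 * (a ^+ 2 + 1) by apply: mulr_gt0; [lra| have := sqr_ge0 a; lra].
have P3 : 0 < 4 * g * (s + 1) by apply: mulr_gt0; [lra|lra].
have q1 : m * (g * (s + 2) ^+ 2) <= a^+2.
  by rewrite -ler_pdivlMr.
have q2 : m * (4 * (a ^+ 2 + 1)) <= 1.
  by rewrite -ler_pdivlMr.
have q3 : m * (4 * g * (s + 1)) <= 1.
  by rewrite -ler_pdivlMr.
have a2 : 0 < a^+2 by apply: exprn_gt0.
have r3 : m * (4 * g * (s + 1)) * a^+2 <= a^+2 by apply: ler_piMl; [exact: ltW|].
have r2 : m * (4 * (a ^+ 2 + 1)) * a^+2 <= a^+2 by apply: ler_piMl; [exact: ltW|].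
have -> : a^+4 = a^+2 * a^+2 by rewrite -exprD.
nra.
Qed.

Theorem lemmaB2 (R : realType) (gam a : R) (u : 'rV[R]_3) (l1 l2 l3 : R) :
  1 < gam -> gam <= 2 -> 0 < a ->
  0 < l1 -> l1 < l2 -> l2 < l3 ->
  gcubic gam a u l1 = 0 -> gcubic gam a u l2 = 0 -> gcubic gam a u l3 = 0 ->
  a ^+ 2 * (gam - 1) / gam
    * Num.min (a ^+ 2 / (gam * (sqnorm3 u + 2) ^+ 2))
        (Num.min (1 / (4 * (a ^+ 2 + 1))) (1 / (4 * gam * (sqnorm3 u + 1))))
  <= l1.
Proof.
move=> g1 g2 a0 p1 p12 p23 h1 h2 h3.
have s0 : 0 <= sqnorm3 u by rewrite /sqnorm3; apply: sumr_ge0 => i _; exact: sqr_ge0.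
move: h1 h2 h3; rewrite /gcubic /=.
set s := sqnorm3 u in s0 *.
set B := _ / (4 * gam).
set E := (4 * a ^+ 4 - 4 * a ^+ 2 + gam * (4 * (s + 1) * a ^+ 2 + (s + 2) ^+ 2)).
set C := a ^+ 2 / (4 * gam ^+ 2) * E.
set D := a ^+ 6 * (gam - 1) / gam ^+ 3.
move=> h1 h2 h3.
have n12 : l1 != l2 by rewrite lt_eqF.
have n13 : l1 != l3 by rewrite lt_eqF //; lra.
have n23 : l2 != l3 by rewrite lt_eqF.
have [eB eC eD] := @vieta R _ _ _ _ _ _ n12 n13 n23 h1 h2 h3.
set m := Num.min _ _.
have m0 : 0 <= m.
  rewrite /m !le_min; apply/and3P; split; apply: divr_ge0; try lra.
  - exact: sqr_ge0.
  - apply: mulr_ge0; [lra| apply: sqr_ge0].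
  - have := sqr_ge0 a; lra.
  - apply: mulr_ge0; lra.
have m1 : m <= a ^+ 2 / (gam * (s + 2) ^+ 2) by rewrite /m ge_min lexx.
have m2 : m <= 1 / (4 * (a ^+ 2 + 1)) by rewrite /m !ge_min lexx orbT.
have m3 : m <= 1 / (4 * gam * (s + 1)) by rewrite /m !ge_min lexx !orbT.
have hk := @key R _ _ _ _ g1 a0 s0 m0 m1 m2 m3.
have Cpos : 0 < C by rewrite eC; nra.
have lC : D <= l1 * C by rewrite eC eD; nra.
have g0 : gam != 0 by rewrite gt_eqF //; lra.
have KC : a ^+ 2 * (gam - 1) / gam * m * C <= D.
  have -> : a ^+ 2 * (gam - 1) / gam * m * C =
     (a ^+ 2 * (gam - 1) / gam * (a ^+ 2 / (4 * gam ^+ 2))) * (m * E).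
    by rewrite /C; field.
  have -> : D = (a ^+ 2 * (gam - 1) / gam * (a ^+ 2 / (4 * gam ^+ 2))) * (4 * a ^+ 2).
    by rewrite /D; field.
  apply: ler_wpM2l => //.
  have a2 : 0 <= a ^+ 2 by exact: sqr_ge0.
  have gp : 0 <= gam by lra.
  have g2p : 0 <= 4 * gam ^+ 2 by apply: mulr_ge0; [lra| exact: sqr_ge0].
  apply: mulr_ge0; apply: divr_ge0 => //; apply: mulr_ge0 => //; lra.
rewrite -(ler_pM2r Cpos); exact: le_trans KC lC.
Qed.
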